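(* Consider binary classification with $\ell_1$ loss: $y:\mathcal{X}\to[0,1]$, every $h\in\mathcal{H}$ takes values in $\{0,1\}$, and $l(a,b)=|a-b|$. Let $p_s$ be a probability distribution on $\mathcal{X}$, let $h_p^*\in\arg\min_{h\in\mathcal{H}}\mathcal{L}_p(h)$, and let $\{(h_k,w_k)\}_{k=1}^K$ (with $h_k\in\mathcal{H}$, $w_k:\mathcal{X}\to[0,1]$ measurable, $\sum_k w_k(x)=1$) be an optimal model ensemble. Then for every $h\in\mathcal{H}$, $$\mathcal{L}_p(h_p^* )\le\mathcal{L}_p(h)\le\mathcal{L}_p(h_p^* )+\mathcal{L}_{p_s}\Big(h,\sum_{k=1}^K w_k\cdot h_k\Big)+\tfrac12\,d_{\bar{\mathcal{H}}\triangle\bar{\mathcal{H}}}(p,p_s).$$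
   Context: $\mathcal{X}$ is a measurable space with fixed measurable labeling function $y$. For a distribution $q$ on $\mathcal{X}$ and measurable real functions $g,g'$: $\mathcal{L}_q(g)=\mathbf{E}_{x\sim q}[|g(x)-y(x)|]$ and $\mathcal{L}_q(g,g')=\mathbf{E}_{x\sim q}[|g(x)-g'(x)|]$. There are $K$ clients with distributions $p_k$ on $\mathcal{X}$ and positive integers $n_k$; $\pi_k=n_k/\sum_j n_j$, $p=\sum_k\pi_k p_k$. The ensemble $\sum_k w_k\cdot h_k$ is $x\mapsto\sum_k w_k(x)h_k(x)$; it is an optimal model ensemble if $\mathcal{L}_p(\sum_k w_k\cdot h_k)\le\min_{h\in\mathcal{H}}\mathcal{L}_p(h)$. The spanned class is $\bar{\mathcal{H}}=\{\sum_{k=1}^K w_k\cdot h_k:\ h_k\in\mathcal{H},\ w_k:\mathcal{X}\to[0,1]\text{ measurable},\ \sum_k w_k(x)=1\ \forall x\}$, and $d_{\bar{\mathcal{H}}\triangle\bar{\mathcal{H}}}(q,q')=2\sup_{g,g'\in\bar{\mathcal{H}}}|\mathcal{L}_q(g,g')-\mathcal{L}_{q'}(g,g')|$. *)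

(* Defs.v *)
From HB Require Import structures.
From mathcomp Require Import all_boot all_order all_algebra.
From mathcomp Require Import all_classical all_reals all_analysis.
Set Implicit Arguments. Unset Strict Implicit. Unset Printing Implicit Defensive.
Import Order.TTheory GRing.Theory Num.Theory.
Local Open Scope classical_set_scope.
Local Open Scope ring_scope.

Section Defs.
Context {d : measure_display} {T : measurableType d} {R : realType}.

Definition Lq2 (q : probability T R) (g g' : T -> R) : \bar R :=
  (\int[q]_x (`|g x - g' x|)%:E)%E.

Definition Lq (y : T -> R) (q : probability T R) (g : T -> R) : \bar R :=
  Lq2 q g y.

Definition ens (K : nat) (w h : 'I_K -> T -> R) : T -> R :=
  fun x => \sum_(k < K) w k x * h k x.

Definition weights (K : nat) (w : 'I_K -> T -> R) : Prop :=
  (forall k, measurable_fun setT (w k)) /\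
  (forall k x, 0 <= w k x <= 1) /\
  (forall x, \sum_(k < K) w k x = 1).

Definition Hbar (K : nat) (H : set (T -> R)) : set (T -> R) :=
  [set g | exists (h w : 'I_K -> T -> R),
     (forall k, H (h k)) /\ weights w /\ g = ens w h].

Definition dHH (K : nat) (H : set (T -> R)) (q q' : probability T R) : \bar R :=
  (2%:E * ereal_sup [set r | exists g g', Hbar K H g /\ Hbar K H g' /\
                      r = `|Lq2 q g g' - Lq2 q' g g'|])%E.

Definition piw (K : nat) (n : 'I_K -> nat) (k : 'I_K) : R :=
  (n k)%:R / (\sum_(j < K) n j)%:R.

Definition is_mixture (K : nat) (n : 'I_K -> nat) (pk : 'I_K -> probability T R)
  (p : probability T R) : Prop :=
  forall A, measurable A -> p A = (\sum_(k < K) (piw n k)%:E * pk k A)%E.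

End Defs.

(* Main.v *)
Require Import Defs.
From HB Require Import structures.
From mathcomp Require Import all_boot all_order all_algebra.
From mathcomp Require Import all_classical all_reals all_analysis.
From mathcomp Require Import measurable_realfun.
From mathcomp Require Import lra.
Import Order.TTheory GRing.Theory Num.Theory.
Local Open Scope classical_set_scope.
Local Open Scope ring_scope.


Section Aux.
Context {d : measure_display} {T : measurableType d} {R : realType}.

Lemma mfun_bigsum (I : Type) (s : seq I) (P : pred I) (f : I -> T -> R) :
  (forall i, measurable_fun setT (f i)) ->
  measurable_fun setT (fun x => \sum_(i <- s | P i) f i x).
Proof.
move=> mf; elim: s => [|a s IH].
  under eq_fun do rewrite big_nil. exact: measurable_cst.
under eq_fun do rewrite big_cons.
case: (P a) => //. exact: measurable_funD.
Qed.

Lemma Lq2_ge0 (q : probability T R) (f g : T -> R) : (0 <= Lq2 q f g)%E.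
Proof. by apply: integral_ge0 => x _; rewrite lee_fin. Qed.

Lemma Lq2_fin (q : probability T R) (f g : T -> R) :
  measurable_fun setT f -> measurable_fun setT g ->
  (forall x, `|f x - g x| <= 2) -> Lq2 q f g \is a fin_num.
Proof.
move=> mf mg b; rewrite ge0_fin_numE ?Lq2_ge0 //.
have le2 : (Lq2 q f g <= \int[q]_(x in setT) (cst 2%:E) x)%E.
  apply: ge0_le_integral => //.
  - by do 2 apply: measurableT_comp => //; exact: measurable_funB.
  - by move=> x _; rewrite lee_fin.
apply: (le_lt_trans le2).
rewrite integral_cst //; apply: lte_mul_pinfty => //.
apply: (le_lt_trans (probability_le1 q measurableT)); exact: ltry.
Qed.

Lemma Lq2_tri (q : probability T R) (f g e : T -> R) :
  measurable_fun setT f -> measurable_fun setT g -> measurable_fun setT e ->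
  (Lq2 q f g <= Lq2 q f e + Lq2 q e g)%E.
Proof.
move=> mf mg me.
have mE : forall u v : T -> R, measurable_fun setT u -> measurable_fun setT v ->
    measurable_fun setT (fun x => (`|u x - v x|)%:E).
  by move=> u v mu mv; do 2 apply: measurableT_comp => //; exact: measurable_funB.
rewrite /Lq2 -ge0_integralD //; last 2 first.
- exact: mE.
- exact: mE.
apply: ge0_le_integral => //.
- exact: mE.
- by apply: emeasurable_funD; exact: mE.
- move=> x _; rewrite lee_fin.
  have -> : f x - g x = (f x - e x) + (e x - g x) by rewrite addrA subrK.
  exact: ler_normD.
Qed.

End Aux.

Theorem corollary1 (d : measure_display) (T : measurableType d) (R : realType)
  (y : T -> R) (H : set (T -> R)) (K : nat) (n : 'I_K -> nat)
  (pk : 'I_K -> probability T R) (p ps : probability T R)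
  (hstar : T -> R) (hk wk : 'I_K -> T -> R) :
  measurable_fun setT y ->
  (forall x, 0 <= y x <= 1) ->
  (forall h, H h -> measurable_fun setT h /\ (forall x, h x = 0 \/ h x = 1)) ->
  (forall k, (0 < n k)%N) ->
  is_mixture n pk p ->
  H hstar -> (forall h, H h -> (Lq y p hstar <= Lq y p h)%E) ->
  (forall k, H (hk k)) -> weights wk ->
  (Lq y p (ens wk hk) <= ereal_inf [set Lq y p h | h in H])%E ->
  forall h, H h ->
    (Lq y p hstar <= Lq y p h)%E /\
    (Lq y p h <= Lq y p hstar + Lq2 ps h (ens wk hk) + (2^-1)%:E * dHH K H p ps)%E.
Proof.
move=> my y01 Hh _ _ Hs opt Hk W ensopt h Hhh.
split; first exact: opt.
have [mw [w01 w1]] := W.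
have [mh h01] := Hh h Hhh.
have mens : measurable_fun setT (ens wk hk).
  apply: mfun_bigsum => k; apply: measurable_funM => //; exact: (Hh _ (Hk k)).1.
have ens01 : forall x, 0 <= ens wk hk x <= 1.
  move=> x; rewrite /ens; apply/andP; split.
    apply: sumr_ge0 => k _; apply: mulr_ge0; first by case/andP: (w01 k x).
    by case: ((Hh _ (Hk k)).2 x) => ->.
  rewrite -(w1 x); apply: ler_sum => k _.
  have /andP[w0 _] := w01 k x.
  by case: ((Hh _ (Hk k)).2 x) => ->; rewrite ?mulr0 ?mulr1.
have bnd : forall x, `|h x - ens wk hk x| <= 2.
  move=> x; have /andP[e0 e1] := ens01 x.
  case: (h01 x) => ->; rewrite ler_norml; apply/andP; split; lra.
have fin_p := Lq2_fin p h (ens wk hk) mh mens bnd.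
have fin_ps := Lq2_fin ps h (ens wk hk) mh mens bnd.
have HbE : Hbar K H (ens wk hk) by exists hk, wk.
have HbH : Hbar K H h.
  exists (fun _ => h), wk; split => //; split => //.
  apply/funext => x; rewrite /ens -big_distrl /= w1 mul1r //.
have supb : (`|Lq2 p h (ens wk hk) - Lq2 ps h (ens wk hk)| <=
    ereal_sup [set r | exists g g', Hbar K H g /\ Hbar K H g' /\
                      r = `|Lq2 p g g' - Lq2 ps g g'|])%E.
  by apply: ereal_sup_ubound; exists h, (ens wk hk).
have half : forall z : \bar R, ((2^-1)%:E * (2%:E * z) = z)%E.
  move=> z; rewrite muleA -EFinM mulVf ?mul1e //.
rewrite /dHH; set S := ereal_sup _ in supb *.
have -> : ((2^-1)%:E * (2%:E * S) = S)%E by exact: half.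
have step1 : (Lq y p h <= Lq y p (ens wk hk) + Lq2 p h (ens wk hk))%E.
  rewrite /Lq addeC; exact: Lq2_tri.
have step2 : (Lq y p (ens wk hk) <= Lq y p hstar)%E.
  apply: (le_trans ensopt); apply: ereal_inf_lbound; by exists hstar.
have step3 : (Lq2 p h (ens wk hk) <= Lq2 ps h (ens wk hk) +
    `|Lq2 p h (ens wk hk) - Lq2 ps h (ens wk hk)|)%E.
  move: fin_p fin_ps; set a := Lq2 p _ _; set b := Lq2 ps _ _.
  move=> fa fb; rewrite -(fineK fa) -(fineK fb) -EFinB.
  rewrite -EFinD lee_fin.
  have := ler_norm (fine a - fine b); lra.
rewrite -addeA.
have st4 := leeD step2 (le_trans step3 (leeD (lexx (Lq2 ps h (ens wk hk))) supb)).
exact: (le_trans step1 st4).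
Qed.
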